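(* Let $f_1,\dots,f_n\colon\mathbb R\to\mathbb R$ and $\eta\colon\mathbb R\times\mathbb R\to(0,\infty)$ be smooth with $\eta(x,0)=1$, and consider the metric $(\star)$ on $\mathbb R^{n+2}$, whose scalar curvature is $-2\eta_{uu}/\eta$. If $\mathrm{Scal}\le-2$ everywhere and $|\eta_u(x,0)|\le1$ for all $x$, then the metric is complete.
   Context: The metric $(\star)$: on $\mathbb R\times\mathbb R^{n+1}$ with coordinates $(x,u,v_1,\dots,v_n)$, conventions $v_0=u$, $v_{-1}=v_{n+1}=0$, $f_0=f_{n+1}=0$, $g_{\eta,f}=\eta(x,u)^2dx^2+\sum_{j=0}^n\big(dv_j+(v_{j-1}f_j(x)-v_{j+1}f_{j+1}(x))dx\big)^2$. $|\eta_u(x,0)|$ is the absolute geodesic curvature of $\gamma(x)=(x,0,\dots,0)$. *)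

(* Defs.v *)
From Stdlib Require Import Reals Lra.
From Coquelicot Require Import Coquelicot.
Open Scope R_scope.

Definition smooth1 (g : R -> R) : Prop :=
  forall (k : nat) (x : R), ex_derive_n g k x.

(* Iterated partial derivatives of a function of two variables (x,u):
   [true] = d/dx, [false] = d/du; the list is applied right-to-left. *)
Fixpoint dpart (l : list bool) (h : R -> R -> R) : R -> R -> R :=
  match l with
  | nil => h
  | cons b l' =>
      let g := dpart l' h in
      if b then (fun x u => Derive (fun x' => g x' u) x)
      else (fun x u => Derive (fun u' => g x u') u)
  end.

Definition smooth2 (h : R -> R -> R) : Prop :=
  forall (l : list bool) (x u : R),
    continuous (fun p : R * R => dpart l h (fst p) (snd p)) (x, u) /\
    ex_derive (fun x' => dpart l h x' u) x /\
    ex_derive (fun u' => dpart l h x u') u.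

Definition eta_u (eta : R -> R -> R) (x u : R) : R :=
  Derive (fun u' => eta x u') u.
Definition eta_uu (eta : R -> R -> R) (x u : R) : R :=
  Derive (fun u' => eta_u eta x u') u.

(* Points of R x R^{n+1}: (x, v) with v 0 = u, v j = v_j for 1 <= j <= n;
   entries v j for j > n are ignored. *)
Definition Pt := (R * (nat -> R))%type.

(* Conventions: f_0 = f_{n+1} = 0, v_{-1} = v_{n+1} = 0. *)
Definition fz (n : nat) (f : nat -> R -> R) (j : nat) (x : R) : R :=
  if Nat.eqb j 0 then 0 else if Nat.leb j n then f j x else 0.
Definition vz (n : nat) (v : nat -> R) (j : nat) : R :=
  if Nat.leb j n then v j else 0.

Definition coef (n : nat) (f : nat -> R -> R) (x : R) (v : nat -> R) (j : nat) : R :=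
  (match j with O => 0 | S k => vz n v k * fz n f j x end)
  - vz n v (S j) * fz n f (S j) x.

Definition gform (n : nat) (eta : R -> R -> R) (f : nat -> R -> R)
    (x : R) (v : nat -> R) (wx : R) (w : nat -> R) : R :=
  (eta x (v O))^2 * wx^2
  + sum_f_R0 (fun j => (w j + coef n f x v j * wx)^2) n.

Definition C1 (c : R -> R) : Prop :=
  forall t, ex_derive c t /\ continuous (Derive c) t.

Definition curve_from_to (n : nat) (cx : R -> R) (cv : nat -> R -> R) (p q : Pt) : Prop :=
  C1 cx /\ (forall j, (j <= n)%nat -> C1 (cv j)) /\
  cx 0 = fst p /\ (forall j, (j <= n)%nat -> cv j 0 = snd p j) /\
  cx 1 = fst q /\ (forall j, (j <= n)%nat -> cv j 1 = snd q j).

Definition curve_length (n : nat) (eta : R -> R -> R) (f : nat -> R -> R)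
    (cx : R -> R) (cv : nat -> R -> R) : R :=
  RInt (fun t => sqrt (gform n eta f (cx t) (fun j => cv j t)
                          (Derive cx t) (fun j => Derive (cv j) t))) 0 1.

Definition rdist (n : nat) (eta : R -> R -> R) (f : nat -> R -> R) (p q : Pt) : Rbar :=
  Glb_Rbar (fun L => exists cx cv, curve_from_to n cx cv p q /\
                                   L = curve_length n eta f cx cv).

Definition rcauchy (n : nat) eta f (P : nat -> Pt) : Prop :=
  forall eps : R, 0 < eps -> exists N : nat, forall k m : nat,
    (N <= k)%nat -> (N <= m)%nat -> Rbar_lt (rdist n eta f (P k) (P m)) eps.

Definition rconverges (n : nat) eta f (P : nat -> Pt) (p : Pt) : Prop :=
  forall eps : R, 0 < eps -> exists N : nat, forall k : nat,
    (N <= k)%nat -> Rbar_lt (rdist n eta f (P k) p) eps.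

Definition metric_complete (n : nat) (eta : R -> R -> R) (f : nat -> R -> R) : Prop :=
  forall P : nat -> Pt, rcauchy n eta f P -> exists p : Pt, rconverges n eta f P p.

(* Main.v *)
Require Import Defs.
From Stdlib Require Import Reals.
From Coquelicot Require Import Coquelicot.
From Stdlib Require Import Lra Lia Classical.
Open Scope R_scope.

Lemma mono_deriv (H d : R -> R) a b : a <= b ->
  (forall t, a <= t <= b -> is_derive H t (d t)) ->
  (forall t, a <= t <= b -> 0 <= d t) -> H a <= H b.
Proof.
  intros hab Hd Hp.
  destruct (MVT_gen H a b d) as [c [Hc E]].
  - intros x Hx. rewrite Rmin_left in Hx by lra. rewrite Rmax_right in Hx by lra.
    apply Hd; lra.
  - intros x Hx. rewrite Rmin_left in Hx by lra. rewrite Rmax_right in Hx by lra.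
    apply continuity_pt_filterlim. apply (@ex_derive_continuous R_AbsRing R_NormedModule).
    eexists; apply Hd; lra.
  - rewrite Rmin_left in Hc by lra. rewrite Rmax_right in Hc by lra.
    assert (0 <= d c) by (apply Hp; lra).
    assert (0 <= d c * (b - a)) by (apply Rmult_le_pos; lra). lra.
Qed.

Lemma is_derive_RInt0 (g : R -> R) t : (forall t, continuous g t) ->
  is_derive (fun s => RInt g 0 s) t (g t).
Proof.
  intros Hg. apply (is_derive_RInt g (fun s => RInt g 0 s) 0 t); [|apply Hg].
  apply filter_forall. intros b. apply (RInt_correct (V:=R_CompleteNormedModule)).
  apply ex_RInt_continuous. intros; apply Hg.
Qed.

Lemma key (F dF g : R -> R) K : 0 <= K ->
  (forall t, 0 <= t <= 1 -> is_derive F t (dF t)) ->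
  (forall t, 0 <= t <= 1 -> Rabs (dF t) <= K * g t) ->
  (forall t, continuous g t) -> (forall t, 0 <= g t) ->
  forall s, 0 <= s <= 1 -> Rabs (F s - F 0) <= K * RInt g 0 1.
Proof.
  intros HK HF Hb Hg Hg0 s Hs.
  set (G := fun s => RInt g 0 s).
  assert (HG : forall t, is_derive G t (g t)) by (intros; apply is_derive_RInt0; auto).
  assert (G0 : G 0 = 0) by (unfold G; rewrite RInt_point; reflexivity).
  assert (Gs : G s <= G 1).
  { apply (mono_deriv G g s 1); [lra| intros; apply HG| intros; apply Hg0]. }
  assert (H1 : K * G 0 - F 0 <= K * G s - F s).
  { apply (mono_deriv (fun t => K * G t - F t) (fun t => K * g t - dF t) 0 s); [lra| |].
    - intros t Ht. apply (is_derive_minus (fun t => K * G t) F t (K * g t) (dF t)).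
      + apply (is_derive_scal G t K (g t)); apply HG.
      + apply HF; lra.
    - intros t Ht. specialize (Hb t ltac:(lra)). apply Rabs_le_between in Hb. lra. }
  assert (H2 : K * G 0 + F 0 <= K * G s + F s).
  { apply (mono_deriv (fun t => K * G t + F t) (fun t => K * g t + dF t) 0 s); [lra| |].
    - intros t Ht. apply (is_derive_plus (fun t => K * G t) F t (K * g t) (dF t)).
      + apply (is_derive_scal G t K (g t)); apply HG.
      + apply HF; lra.
    - intros t Ht. specialize (Hb t ltac:(lra)). apply Rabs_le_between in Hb. lra. }
  rewrite G0 in H1, H2. fold (G 1).
  assert (K * G s <= K * G 1) by (apply Rmult_le_compat_l; lra).
  apply Rabs_le_between. lra.
Qed.


Lemma is_derive_eq (f : R -> R) x d d' : is_derive f x d -> @eq R d d' -> is_derive f x d'.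
Proof. intros H ->; exact H. Qed.

Lemma is_derive_mul (f g : R -> R) x df dg : is_derive f x df -> is_derive g x dg ->
  is_derive (fun t => f t * g t) x (df * g x + f x * dg).
Proof.
  intros Hf Hg. apply (is_derive_mult f g x df dg Hf Hg). intros; apply Rmult_comm.
Qed.

Lemma is_derive_expneg x : is_derive (fun t => exp (- t)) x (- exp (- x)).
Proof. auto_derive; auto; ring. Qed.

Lemma is_derive_exppos x : is_derive (fun t => exp t) x (exp x).
Proof. apply is_derive_exp. Qed.

Section Eta.
Variable eta : R -> R -> R.
Hypothesis Hs : smooth2 eta.
Hypothesis Hpos : forall x u, 0 < eta x u.
Hypothesis H0 : forall x, eta x 0 = 1.
Hypothesis Hsc : forall x u : R, -2 * eta_uu eta x u / eta x u <= -2.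
Hypothesis Hd0 : forall x : R, Rabs (eta_u eta x 0) <= 1.

Lemma eta_d1 x u : is_derive (fun u => eta x u) u (eta_u eta x u).
Proof. destruct (Hs nil x u) as [_ [_ H]]. apply Derive_correct. exact H. Qed.

Lemma eta_d2 x u : is_derive (fun u => eta_u eta x u) u (eta_uu eta x u).
Proof. destruct (Hs (cons false nil) x u) as [_ [_ H]]. apply Derive_correct. exact H. Qed.

Lemma eta_uu_ge x u : eta x u <= eta_uu eta x u.
Proof.
  specialize (Hsc x u). specialize (Hpos x u).
  assert (E : -2 * eta_uu eta x u / eta x u * eta x u = -2 * eta_uu eta x u) by (field; lra).
  assert (-2 * eta_uu eta x u / eta x u * eta x u <= -2 * eta x u)
    by (apply Rmult_le_compat_r; lra). lra.
Qed.

Lemma eta_lb_pos x u : 0 <= u -> exp (- u) <= eta x u.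
Proof.
  intros Hu.
  set (h := fun t => exp (- t) * (eta_u eta x t + eta x t)).
  assert (Hh : forall t, 0 <= t -> 0 <= h t).
  { intros t Ht. assert (h 0 <= h t).
    { apply (mono_deriv h (fun t => exp (- t) * (eta_uu eta x t - eta x t)) 0 t Ht).
      - intros s _. eapply is_derive_eq.
        + apply is_derive_mul. apply is_derive_expneg.
          apply (is_derive_plus (fun t => eta_u eta x t) (fun t => eta x t)); [apply eta_d2|apply eta_d1].
        + simpl. unfold plus; simpl. ring.
      - intros s _. apply Rmult_le_pos. left; apply exp_pos. pose proof (eta_uu_ge x s); lra. }
    assert (0 <= h 0).
    { unfold h. rewrite Ropp_0, exp_0, H0. specialize (Hd0 x). apply Rabs_le_between in Hd0. lra. }
    lra. }
  assert (HK : 1 <= exp u * eta x u).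
  { replace 1 with (exp 0 * eta x 0) by (rewrite exp_0, H0; ring).
    apply (mono_deriv (fun t => exp t * eta x t) (fun t => exp t * exp t * h t) 0 u Hu).
    - intros s _. eapply is_derive_eq.
      + apply is_derive_mul. apply is_derive_exppos. apply eta_d1.
      + unfold h. replace (exp s * exp s * (exp (- s) * (eta_u eta x s + eta x s)))
          with (exp s * (exp s * exp (-s)) * (eta_u eta x s + eta x s)) by ring.
        rewrite <- exp_plus. replace (s + - s) with 0 by ring. rewrite exp_0. ring.
    - intros s Hs'. apply Rmult_le_pos. apply Rmult_le_pos; left; apply exp_pos. apply Hh; lra. }
  assert (E : exp (- u) * (exp u * eta x u) = eta x u).
  { replace (exp (- u) * (exp u * eta x u)) with (exp (-u) * exp u * eta x u) by ring.
    rewrite <- exp_plus. replace (- u + u) with 0 by ring. rewrite exp_0. ring. }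
  assert (exp (- u) * 1 <= exp (- u) * (exp u * eta x u))
    by (apply Rmult_le_compat_l; [left; apply exp_pos| exact HK]). lra.
Qed.

Lemma eta_lb_neg x u : u <= 0 -> exp u <= eta x u.
Proof.
  intros Hu.
  set (h := fun t => exp t * (eta x t - eta_u eta x t)).
  assert (Hh : forall t, t <= 0 -> 0 <= h t).
  { intros t Ht. assert (- h t <= - h 0).
    { apply (mono_deriv (fun t => - h t) (fun t => exp t * (eta_uu eta x t - eta x t)) t 0 Ht).
      - intros s _. eapply is_derive_eq.
        + apply (is_derive_opp (fun t => exp t * (eta x t - eta_u eta x t))). apply is_derive_mul. apply is_derive_exppos.
          apply (is_derive_minus (fun t => eta x t) (fun t => eta_u eta x t)); [apply eta_d1|apply eta_d2].
        + simpl. unfold opp, minus, plus, opp; simpl. ring.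
      - intros s _. apply Rmult_le_pos. left; apply exp_pos. pose proof (eta_uu_ge x s); lra. }
    assert (0 <= h 0).
    { unfold h. rewrite exp_0, H0. specialize (Hd0 x). apply Rabs_le_between in Hd0. lra. }
    lra. }
  assert (HK : 1 <= exp (- u) * eta x u).
  { replace 1 with (exp (- 0) * eta x 0) by (rewrite Ropp_0, exp_0, H0; ring).
    assert (- (exp (- u) * eta x u) <= - (exp (- 0) * eta x 0)); [|lra].
    apply (mono_deriv (fun t => - (exp (- t) * eta x t)) (fun t => exp (- t) * exp (- t) * h t) u 0 Hu).
    - intros s _. eapply is_derive_eq.
      + apply (is_derive_opp (fun t => exp (- t) * eta x t)). apply is_derive_mul. apply is_derive_expneg. apply eta_d1.
      + unfold h, opp; simpl. replace (exp (- s) * exp (- s) * (exp s * (eta x s - eta_u eta x s)))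
          with (exp (- s) * (exp (- s) * exp s) * (eta x s - eta_u eta x s)) by ring.
        rewrite <- exp_plus. replace (- s + s) with 0 by ring. rewrite exp_0. ring.
    - intros s Hs'. apply Rmult_le_pos. apply Rmult_le_pos; left; apply exp_pos. apply Hh; lra. }
  assert (E : exp u * (exp (- u) * eta x u) = eta x u).
  { replace (exp u * (exp (- u) * eta x u)) with (exp u * exp (- u) * eta x u) by ring.
    rewrite <- exp_plus. replace (u + - u) with 0 by ring. rewrite exp_0. ring. }
  assert (exp u * 1 <= exp u * (exp (- u) * eta x u))
    by (apply Rmult_le_compat_l; [left; apply exp_pos| exact HK]). lra.
Qed.

Lemma eta_lb x u : exp (- Rabs u) <= eta x u.
Proof.
  destruct (Rle_dec 0 u).
  - rewrite Rabs_pos_eq by lra. apply eta_lb_pos; auto.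
  - rewrite Rabs_left by lra. rewrite Ropp_involutive. apply eta_lb_neg; lra.
Qed.
End Eta.


Lemma cplus (f g : R -> R) x : continuous f x -> continuous g x -> continuous (fun t => f t + g t) x.
Proof. intros; apply (continuous_plus f g x); auto. Qed.
Lemma cmult (f g : R -> R) x : continuous f x -> continuous g x -> continuous (fun t => f t * g t) x.
Proof. intros; apply (continuous_mult f g x); auto. Qed.
Lemma cminus (f g : R -> R) x : continuous f x -> continuous g x -> continuous (fun t => f t - g t) x.
Proof. intros; apply (continuous_minus f g x); auto. Qed.
Lemma cconst (c : R) x : continuous (fun _ : R => c) x.
Proof. apply (continuous_const (U:=R_UniformSpace) (V:=R_UniformSpace)). Qed.
Lemma csq (f : R -> R) x : continuous f x -> continuous (fun t => f t ^ 2) x.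
Proof. intros. apply (continuous_ext (fun t => f t * (f t * 1))). intros; simpl; ring.
  apply cmult; auto. apply cmult; auto. apply cconst. Qed.
Lemma csum (h : nat -> R -> R) m x : (forall j, (j <= m)%nat -> continuous (h j) x) ->
  continuous (fun t => sum_f_R0 (fun j => h j t) m) x.
Proof.
  induction m; intros H; simpl. apply H; lia.
  apply cplus. apply IHm. intros; apply H; lia. apply H; lia.
Qed.
Lemma cder (g : R -> R) x : ex_derive g x -> continuous g x.
Proof. apply (@ex_derive_continuous R_AbsRing R_NormedModule). Qed.

Section Cont.
Variable n : nat.
Variable f : nat -> R -> R.
Variable eta : R -> R -> R.
Hypothesis Hf : forall j : nat, (1 <= j <= n)%nat -> smooth1 (f j).
Hypothesis Hs : smooth2 eta.

Lemma f_der j x : (1 <= j <= n)%nat -> ex_derive (f j) x.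
Proof. intros H. exact (Hf j H 1%nat x). Qed.

Lemma fz_cont (c : R -> R) j t : continuous c t -> continuous (fun t => fz n f j (c t)) t.
Proof.
  intros Hc. unfold fz. destruct (Nat.eqb j 0) eqn:E1. apply cconst.
  destruct (Nat.leb j n) eqn:E2; [|apply cconst].
  apply Nat.eqb_neq in E1. apply Nat.leb_le in E2.
  apply (continuous_comp c (f j)); auto. apply cder, f_der; lia.
Qed.

Lemma vz_cont (cv : nat -> R -> R) k t : (forall j, (j <= n)%nat -> continuous (cv j) t) ->
  continuous (fun t => vz n (fun j => cv j t) k) t.
Proof.
  intros H. unfold vz. destruct (Nat.leb k n) eqn:E; [|apply cconst].
  apply Nat.leb_le in E. apply H; auto.
Qed.

Lemma coef_cont (cx : R -> R) (cv : nat -> R -> R) j t : continuous cx t ->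
  (forall j, (j <= n)%nat -> continuous (cv j) t) ->
  continuous (fun t => coef n f (cx t) (fun j => cv j t) j) t.
Proof.
  intros Hx Hv. unfold coef. apply cminus.
  - destruct j. apply cconst. apply cmult. apply vz_cont; auto. apply fz_cont; auto.
  - apply cmult. apply vz_cont; auto. apply fz_cont; auto.
Qed.

Lemma eta_cont (a b : R -> R) t : continuous a t -> continuous b t ->
  continuous (fun t => eta (a t) (b t)) t.
Proof.
  intros Ha Hb. apply (continuous_comp_2 a b eta t Ha Hb).
  destruct (Hs nil (a t) (b t)) as [H _]. exact H.
Qed.

Definition gfun (cx : R -> R) (cv : nat -> R -> R) (t : R) : R :=
  sqrt (gform n eta f (cx t) (fun j => cv j t) (Derive cx t) (fun j => Derive (cv j) t)).

Lemma gfun_cont cx cv t : Defs.C1 cx -> (forall j, (j <= n)%nat -> Defs.C1 (cv j)) ->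
  continuous (gfun cx cv) t.
Proof.
  intros Hx Hv. unfold gfun. apply continuous_sqrt_comp. unfold gform.
  assert (Cx : continuous cx t) by (apply cder; apply Hx).
  assert (Cv : forall j, (j <= n)%nat -> continuous (cv j) t) by (intros; apply cder; apply Hv; auto).
  apply cplus.
  - apply cmult. apply csq. apply eta_cont; auto. apply Cv; lia. apply csq. apply Hx.
  - apply (csum (fun j t => (Derive (cv j) t + coef n f (cx t) (fun j => cv j t) j * Derive cx t) ^ 2)).
    intros j Hj. apply csq. apply cplus. apply Hv; auto. apply cmult.
    apply coef_cont; auto. apply Hx.
Qed.
End Cont.


Lemma exp_le x y : x <= y -> exp x <= exp y.
Proof. intros [H|H]. left; apply exp_increasing; auto. subst; lra. Qed.

Lemma sum_nonneg (a : nat -> R) m : (forall i, 0 <= a i) -> 0 <= sum_f_R0 a m.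
Proof. intros H; induction m; simpl; auto. specialize (H (S m)); lra. Qed.

Lemma term_le_sum (a : nat -> R) m j : (forall i, 0 <= a i) -> (j <= m)%nat -> a j <= sum_f_R0 a m.
Proof.
  intros H; induction m; intros Hj; simpl.
  - replace j with 0%nat by lia; lra.
  - destruct (Nat.eq_dec j (S m)). subst. pose proof (sum_nonneg a m H); lra.
    pose proof (IHm ltac:(lia)). specialize (H (S m)); lra.
Qed.

Lemma telesc (a : nat -> R) m : sum_f_R0 (fun j => a j - a (S j)) m = a 0%nat - a (S m).
Proof. induction m; simpl; auto. rewrite IHm; ring. Qed.

Lemma dsum (h dh : nat -> R -> R) m t : (forall j, (j <= m)%nat -> is_derive (h j) t (dh j t)) ->
  is_derive (fun t => sum_f_R0 (fun j => h j t) m) t (sum_f_R0 (fun j => dh j t) m).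
Proof.
  induction m; intros H; simpl. apply H; lia.
  apply (is_derive_plus (fun t => sum_f_R0 (fun j => h j t) m) (h (S m))).
  apply IHm; intros; apply H; lia. apply H; lia.
Qed.

Lemma abs_sqrt_sq x : sqrt (x ^ 2) = Rabs x.
Proof. rewrite <- sqrt_Rsqr_abs. f_equal. unfold Rsqr; ring. Qed.

Section Curve.
Variable n : nat.
Variable f : nat -> R -> R.
Variable eta : R -> R -> R.
Hypothesis Hf : forall j : nat, (1 <= j <= n)%nat -> smooth1 (f j).
Hypothesis Hs : smooth2 eta.
Hypothesis Hpos : forall x u, 0 < eta x u.
Hypothesis H0 : forall x, eta x 0 = 1.
Hypothesis Hsc : forall x u : R, -2 * eta_uu eta x u / eta x u <= -2.
Hypothesis Hd0 : forall x : R, Rabs (eta_u eta x 0) <= 1.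

Definition Sv (v : nat -> R) := 1 + sum_f_R0 (fun j => v j ^ 2) n.
Definition Nv (v : nat -> R) := sqrt (Sv v).

Lemma Sv_ge1 v : 1 <= Sv v.
Proof. unfold Sv. pose proof (sum_nonneg (fun j => v j ^ 2) n (fun i => pow2_ge_0 _)). lra. Qed.

Lemma Nv_ge1 v : 1 <= Nv v.
Proof. unfold Nv. rewrite <- sqrt_1. apply sqrt_le_1_alt, Sv_ge1. Qed.

Lemma Nv_ext v w : (forall j, (j <= n)%nat -> v j = w j) -> Nv v = Nv w.
Proof. intros H. unfold Nv, Sv. f_equal. f_equal. apply sum_eq. intros; rewrite H; auto. Qed.

Lemma abs_le_Nv v j : (j <= n)%nat -> Rabs (v j) <= Nv v.
Proof.
  intros Hj. rewrite <- abs_sqrt_sq. unfold Nv, Sv. apply sqrt_le_1_alt.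
  pose proof (term_le_sum (fun j => v j ^ 2) n j (fun i => pow2_ge_0 _) Hj). simpl in *; lra.
Qed.

Lemma vz_le v k : Rabs (vz n v k) <= Nv v.
Proof.
  unfold vz. destruct (Nat.leb k n) eqn:E. apply abs_le_Nv. apply Nat.leb_le; auto.
  rewrite Rabs_R0. pose proof (Nv_ge1 v); lra.
Qed.

Lemma coef_orth x v : sum_f_R0 (fun j => v j * coef n f x v j) n = 0.
Proof.
  set (a := fun j => match j with 0%nat => 0 | S k => vz n v k * vz n v j * fz n f j x end).
  rewrite (sum_eq _ (fun j => a j - a (S j))).
  - rewrite telesc. unfold a. unfold vz at 2. rewrite (proj2 (Nat.leb_gt (S n) n)) by lia. ring.
  - intros i Hi. unfold a, coef. replace (v i) with (vz n v i).
    destruct i; ring. unfold vz. rewrite (proj2 (Nat.leb_le i n)) by lia. auto.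
Qed.

Lemma coef_le x v j Fm : (forall i, Rabs (fz n f i x) <= Fm) ->
  Rabs (coef n f x v j) <= 2 * Nv v * Fm.
Proof.
  intros HF. unfold coef.
  assert (Hfm : 0 <= Fm) by (specialize (HF 0%nat); pose proof (Rabs_pos (fz n f 0 x)); lra).
  assert (Hb : forall k i, Rabs (vz n v k * fz n f i x) <= Nv v * Fm).
  { intros k i. rewrite Rabs_mult. apply Rmult_le_compat; auto using Rabs_pos, vz_le. }
  unfold Rminus. eapply Rle_trans. apply Rabs_triang. rewrite Rabs_Ropp.
  assert (Rabs (match j with 0%nat => 0 | S k => vz n v k * fz n f j x end) <= Nv v * Fm).
  { destruct j. rewrite Rabs_R0. apply Rmult_le_pos; auto. pose proof (Nv_ge1 v); lra. apply Hb. }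
  pose proof (Hb (S j) (S j)). lra.
Qed.

Lemma gform_ge_om x v wx w j : (j <= n)%nat ->
  (w j + coef n f x v j * wx) ^ 2 <= gform n eta f x v wx w.
Proof.
  intros Hj. unfold gform.
  pose proof (term_le_sum (fun j => (w j + coef n f x v j * wx) ^ 2) n j (fun i => pow2_ge_0 _) Hj).
  assert (0 <= (eta x (v 0%nat))^2 * wx^2) by (apply Rmult_le_pos; apply pow2_ge_0). simpl in *; lra.
Qed.

Lemma gform_ge_x x v wx w : (eta x (v 0%nat))^2 * wx^2 <= gform n eta f x v wx w.
Proof.
  unfold gform. pose proof (sum_nonneg (fun j => (w j + coef n f x v j * wx) ^ 2) n (fun i => pow2_ge_0 _)). lra.
Qed.

Lemma om_le x v wx w j : (j <= n)%nat ->
  Rabs (w j + coef n f x v j * wx) <= sqrt (gform n eta f x v wx w).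
Proof. intros Hj. rewrite <- abs_sqrt_sq. apply sqrt_le_1_alt, gform_ge_om; auto. Qed.

Lemma x_le x v wx w : eta x (v 0%nat) * Rabs wx <= sqrt (gform n eta f x v wx w).
Proof.
  replace (eta x (v 0%nat) * Rabs wx) with (sqrt ((eta x (v 0%nat))^2 * wx^2)).
  apply sqrt_le_1_alt, gform_ge_x.
  rewrite sqrt_mult_alt by apply pow2_ge_0. rewrite !abs_sqrt_sq.
  rewrite Rabs_pos_eq; auto. left; apply Hpos.
Qed.

Lemma RInt_nonneg (g : R -> R) : (forall t, continuous g t) -> (forall t, 0 <= g t) -> 0 <= RInt g 0 1.
Proof.
  intros Hc Hp. replace 0 with (RInt g 0 0) at 1 by (rewrite RInt_point; reflexivity).
  apply (mono_deriv (fun s => RInt g 0 s) g 0 1); [lra| |auto].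
  intros; apply is_derive_RInt0; auto.
Qed.

Section OneCurve.
Variables (cx : R -> R) (cv : nat -> R -> R) (P Q : Pt).
Hypothesis Hc : curve_from_to n cx cv P Q.

Let g := gfun n f eta cx cv.
Let L := RInt g 0 1.

Lemma Hx : Defs.C1 cx. Proof. apply Hc. Qed.
Lemma Hv : forall j, (j <= n)%nat -> Defs.C1 (cv j). Proof. apply Hc. Qed.

Lemma g_cont t : continuous g t. Proof. apply gfun_cont; auto using Hx, Hv. Qed.
Lemma g_pos t : 0 <= g t. Proof. apply sqrt_pos. Qed.
Lemma L_pos : 0 <= L. Proof. apply RInt_nonneg; auto using g_cont, g_pos. Qed.

Definition Nt t := Nv (fun j => cv j t).

Lemma Nt_bound s : 0 <= s <= 1 -> Rabs (Nt s - Nt 0) <= INR (S n) * L.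
Proof.
  apply (key Nt (fun t => sum_f_R0 (fun j => INR 2 * Derive (cv j) t * cv j t ^ 1) n / (2 * sqrt (Sv (fun j => cv j t))))
    g (INR (S n))); auto using g_cont, g_pos. apply pos_INR.
  - intros t Ht. unfold Nt, Nv. apply is_derive_sqrt. 2: pose proof (Sv_ge1 (fun j => cv j t)); lra.
    unfold Sv. eapply is_derive_eq.
    apply (is_derive_plus (fun _ => 1) (fun t => sum_f_R0 (fun j => cv j t ^ 2) n)).
    apply is_derive_const.
    apply (dsum (fun j t => cv j t ^ 2) (fun j t => INR 2 * Derive (cv j) t * cv j t ^ 1)).
    intros j Hj. apply is_derive_pow. apply Derive_correct. apply Hv; auto.
    unfold plus, zero; simpl. ring.
  - intros t Ht.
    set (v := fun j => cv j t). set (N := Nv v).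
    set (om := fun j => Derive (cv j) t + coef n f (cx t) v j * Derive cx t).
    assert (HN : 1 <= N) by apply Nv_ge1.
    assert (E : sum_f_R0 (fun j => INR 2 * Derive (cv j) t * cv j t ^ 1) n
              = 2 * sum_f_R0 (fun j => v j * om j) n).
    { assert (E1 : sum_f_R0 (fun j => v j * om j) n = sum_f_R0 (fun j => v j * Derive (cv j) t) n).
      { unfold om. rewrite (sum_eq _ (fun j => v j * Derive (cv j) t + (v j * coef n f (cx t) v j) * Derive cx t)).
        rewrite sum_plus. rewrite <- (scal_sum (fun j => v j * coef n f (cx t) v j)). rewrite coef_orth. ring.
        intros; ring. }
      rewrite E1, scal_sum. apply sum_eq. intros; unfold v; simpl; ring. }
    rewrite E. fold (Nv v). fold N.
    assert (Hs1 : Rabs (sum_f_R0 (fun j => v j * om j) n) <= N * g t * INR (S n)).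
    { eapply Rle_trans. apply sum_f_R0_triangle. rewrite <- sum_cte.
      apply sum_Rle. intros j Hj. rewrite Rabs_mult. apply Rmult_le_compat; auto using Rabs_pos.
      apply abs_le_Nv; auto. exact (om_le (cx t) v (Derive cx t) (fun j => Derive (cv j) t) j Hj). }
    replace (2 * sum_f_R0 (fun j => v j * om j) n / (2 * N)) with (sum_f_R0 (fun j => v j * om j) n / N)
      by (field; lra).
    unfold Rdiv. rewrite Rabs_mult. rewrite Rabs_inv, (Rabs_pos_eq N) by lra.
    apply (Rmult_le_reg_r N). lra. rewrite Rmult_assoc, Rinv_l by lra. nra.
Qed.


Let B := Nv (snd P) + INR (S n) * L.

Lemma Nt0 : Nt 0 = Nv (snd P).
Proof. unfold Nt. apply Nv_ext. intros j Hj. destruct Hc as [_ [_ [_ [H _]]]]. apply H; auto. Qed.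

Lemma Nt_le s : 0 <= s <= 1 -> Nt s <= B.
Proof. intros Hs'. pose proof (Nt_bound s Hs'). apply Rabs_le_between in H. unfold B. rewrite <- Nt0. lra. Qed.

Lemma eta_ge t : 0 <= t <= 1 -> exp (- B) <= eta (cx t) (cv 0%nat t).
Proof.
  intros Ht. eapply Rle_trans; [|apply (eta_lb eta Hs Hpos H0 Hsc Hd0)].
  apply exp_le. pose proof (Nt_le t Ht).
  pose proof (abs_le_Nv (fun j => cv j t) 0 ltac:(lia)). unfold Nt in *. lra.
Qed.

Lemma dx_le t : 0 <= t <= 1 -> Rabs (Derive cx t) <= exp B * g t.
Proof.
  intros Ht. pose proof (eta_ge t Ht).
  pose proof (x_le (cx t) (fun j => cv j t) (Derive cx t) (fun j => Derive (cv j) t)) as Hxl.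
  fold (gfun n f eta cx cv t) in Hxl. fold g in Hxl.
  assert (exp (- B) * Rabs (Derive cx t) <= g t).
  { eapply Rle_trans; [|exact Hxl]. apply Rmult_le_compat_r; auto using Rabs_pos. }
  assert (E : exp B * exp (- B) = 1) by (rewrite <- exp_plus; replace (B + - B) with 0 by ring; apply exp_0).
  assert (exp B * (exp (- B) * Rabs (Derive cx t)) <= exp B * g t)
    by (apply Rmult_le_compat_l; [left; apply exp_pos| auto]).
  rewrite <- Rmult_assoc, E in H2. lra.
Qed.

Lemma x_bound s : 0 <= s <= 1 -> Rabs (cx s - cx 0) <= exp B * L.
Proof.
  apply (key cx (Derive cx) g (exp B)); auto using g_cont, g_pos.
  left; apply exp_pos. intros t _. apply Derive_correct, Hx. apply dx_le.
Qed.

Lemma v_bound j Fm : (j <= n)%nat -> 0 <= Fm ->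
  (forall y, Rabs (y - cx 0) <= exp B * L -> forall i, Rabs (fz n f i y) <= Fm) ->
  forall s, 0 <= s <= 1 -> Rabs (cv j s - cv j 0) <= (1 + 2 * B * Fm * exp B) * L.
Proof.
  intros Hj HFm HF.
  assert (HB : 1 <= B) by (pose proof (Nt_le 0 ltac:(lra)); pose proof (Nv_ge1 (fun j => cv j 0)); unfold Nt in *; lra).
  apply (key (cv j) (Derive (cv j)) g); auto using g_cont, g_pos.
  assert (0 <= 2 * B * Fm * exp B). { apply Rmult_le_pos. apply Rmult_le_pos; lra. left; apply exp_pos. } lra.
  intros t _. apply Derive_correct, Hv; auto.
  intros t Ht. set (v := fun j => cv j t).
  pose proof (om_le (cx t) v (Derive cx t) (fun j => Derive (cv j) t) j Hj) as Hom.
  fold (gfun n f eta cx cv t) in Hom. fold g in Hom.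
  assert (Hco : Rabs (coef n f (cx t) v j) <= 2 * B * Fm).
  { eapply Rle_trans. apply coef_le. apply HF. apply x_bound; auto.
    pose proof (Nt_le t Ht). unfold Nt in H. fold v in H.
    apply Rmult_le_compat_r; auto. lra. }
  pose proof (dx_le t Ht).
  replace (Derive (cv j) t) with ((Derive (cv j) t + coef n f (cx t) v j * Derive cx t) - coef n f (cx t) v j * Derive cx t) by ring.
  unfold Rminus. eapply Rle_trans. apply Rabs_triang. rewrite Rabs_Ropp, Rabs_mult.
  assert (Rabs (coef n f (cx t) v j) * Rabs (Derive cx t) <= (2 * B * Fm) * (exp B * g t))
    by (apply Rmult_le_compat; auto using Rabs_pos). 
  assert (Hom2 : Rabs (Derive (cv j) t + coef n f (cx t) v j * Derive cx t) <= g t) by exact Hom.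
  replace ((1 + 2 * B * Fm * exp B) * g t) with (g t + 2 * B * Fm * (exp B * g t)) by ring. lra.
Qed.

End OneCurve.

Lemma curve_main cx cv P Q : curve_from_to n cx cv P Q ->
  let L := curve_length n eta f cx cv in
  let B := Nv (snd P) + INR (S n) * L in
  0 <= L /\ Nv (snd Q) <= B /\ Rabs (fst Q - fst P) <= exp B * L /\
  (forall Fm, 0 <= Fm -> (forall y, Rabs (y - fst P) <= exp B * L -> forall i, Rabs (fz n f i y) <= Fm) ->
   forall j, (j <= n)%nat -> Rabs (snd Q j - snd P j) <= (1 + 2 * B * Fm * exp B) * L).
Proof.
  intros Hc L B.
  pose proof Hc as (Hx & Hv & Hx0 & Hv0 & Hx1 & Hv1).
  split; [|split; [|split]].
  - apply (L_pos cx cv P Q Hc).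
  - replace (Nv (snd Q)) with (Nt cv 1). apply (Nt_le cx cv P Q Hc). lra.
    unfold Nt. apply Nv_ext. intros; auto.
  - rewrite <- Hx1, <- Hx0. apply (x_bound cx cv P Q Hc). lra.
  - intros Fm HFm HF j Hj. rewrite <- Hv1, <- Hv0 by auto.
    apply (v_bound cx cv P Q Hc); auto. rewrite Hx0. exact HF. lra.
Qed.

End Curve.


Lemma cont_ball2 (F : R * R -> R) (p : R*R) : continuous F p -> exists d, 0 < d /\
  forall x u, Rabs (x - fst p) < d -> Rabs (u - snd p) < d -> Rabs (F (x,u) - F p) < 1.
Proof.
intros H.
assert (H1 := H (ball (F p) (mkposreal 1 Rlt_0_1)) (locally_ball _ _)).
destruct H1 as [e He].
exists e. split. apply cond_pos. intros x u Hx Hu. apply (He (x,u)). split; simpl. exact Hx. exact Hu.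
Qed.

Lemma cont_ball1 (F : R -> R) (p : R) : continuous F p -> exists d, 0 < d /\
  forall x, Rabs (x - p) < d -> Rabs (F x - F p) < 1.
Proof.
intros H.
assert (H1 := H (ball (F p) (mkposreal 1 Rlt_0_1)) (locally_ball _ _)).
destruct H1 as [e He].
exists e. split. apply cond_pos. intros x Hx. apply (He x). exact Hx.
Qed.

Lemma ev_all (Pj : nat -> nat -> Prop) m : (forall j, (j <= m)%nat -> exists N, forall k, (N <= k)%nat -> Pj j k) ->
  exists N, forall k, (N <= k)%nat -> forall j, (j <= m)%nat -> Pj j k.
Proof.
  induction m; intros H.
  - destruct (H 0%nat ltac:(lia)) as [N HN]. exists N. intros k Hk j Hj. replace j with 0%nat by lia. auto.
  - destruct IHm as [N1 H1]. intros; apply H; lia.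
    destruct (H (S m) ltac:(lia)) as [N2 H2]. exists (max N1 N2). intros k Hk j Hj.
    destruct (Nat.eq_dec j (S m)). subst; apply H2; lia. apply H1; lia.
Qed.

Lemma rdist_le n eta f p q cx cv : curve_from_to n cx cv p q ->
  Rbar_le (rdist n eta f p q) (curve_length n eta f cx cv).
Proof.
  intros Hc. unfold rdist. destruct (Glb_Rbar_correct (fun L => exists cx cv, curve_from_to n cx cv p q /\
                                   L = curve_length n eta f cx cv)) as [Hl _].
  apply Hl. exists cx, cv; auto.
Qed.

Lemma rdist_lt_ex n eta f p q (eps : R) : Rbar_lt (rdist n eta f p q) eps ->
  exists cx cv, curve_from_to n cx cv p q /\ curve_length n eta f cx cv < eps.
Proof.
  intros H. apply NNPP. intros Hn.
  destruct (Glb_Rbar_correct (fun L => exists cx cv, curve_from_to n cx cv p q /\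
                                   L = curve_length n eta f cx cv)) as [_ Hg].
  assert (H1 : Rbar_le eps (rdist n eta f p q)).
  { apply Hg. intros L [cx [cv [Hc ->]]]. simpl. apply Rnot_lt_le. intros Hl. apply Hn. exists cx, cv; auto. }
  apply (Rbar_lt_not_le _ _ H H1).
Qed.

Lemma C1_affine a b : Defs.C1 (fun t => a + t * b).
Proof.
  intros t. assert (E : forall s, Derive (fun t => a + t * b) s = b).
  { intros s. apply is_derive_unique. auto_derive; auto; ring. }
  split. auto_derive; auto. apply (continuous_ext (fun _ => b)). intros; rewrite E; auto. apply cconst.
Qed.
Lemma Derive_affine a b s : Derive (fun t => a + t * b) s = b.
Proof. apply is_derive_unique. auto_derive; auto; ring. Qed.

Lemma sq_le_abs a b : Rabs a <= b -> a ^ 2 <= b ^ 2.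
Proof. intros H. rewrite <- (pow2_abs a). pose proof (Rabs_pos a). nra. Qed.

Section Line.
Variable n : nat.
Variable f : nat -> R -> R.
Variable eta : R -> R -> R.
Hypothesis Hf : forall j : nat, (1 <= j <= n)%nat -> smooth1 (f j).
Hypothesis Hs : smooth2 eta.
Hypothesis Hpos : forall x u, 0 < eta x u.

Lemma coef_le2 x v j V Fm : (forall k, Rabs (vz n v k) <= V) -> (forall i, Rabs (fz n f i x) <= Fm) ->
  Rabs (coef n f x v j) <= 2 * V * Fm.
Proof.
  intros HV HF. unfold coef.
  assert (Hfm : 0 <= Fm) by (specialize (HF 0%nat); pose proof (Rabs_pos (fz n f 0 x)); lra).
  assert (HV0 : 0 <= V) by (specialize (HV 0%nat); pose proof (Rabs_pos (vz n v 0)); lra).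
  assert (Hb : forall k i, Rabs (vz n v k * fz n f i x) <= V * Fm).
  { intros k i. rewrite Rabs_mult. apply Rmult_le_compat; auto using Rabs_pos. }
  unfold Rminus. eapply Rle_trans. apply Rabs_triang. rewrite Rabs_Ropp.
  assert (Rabs (match j with 0%nat => 0 | S k => vz n v k * fz n f j x end) <= V * Fm).
  { destruct j. rewrite Rabs_R0. apply Rmult_le_pos; auto. apply Hb. }
  pose proof (Hb (S j) (S j)). lra.
Qed.

Lemma line_bound (xs : R) (vs : nat -> R) d0 H Fm (Q : Pt) d :
  0 < d0 <= 1 ->
  (forall x u, Rabs (x - xs) <= d0 -> Rabs (u - vs 0%nat) <= d0 -> eta x u <= H) ->
  (forall y, Rabs (y - xs) <= d0 -> forall i, Rabs (fz n f i y) <= Fm) ->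
  0 <= d <= d0 -> Rabs (fst Q - xs) <= d -> (forall j, (j <= n)%nat -> Rabs (snd Q j - vs j) <= d) ->
  Rbar_le (rdist n eta f Q (xs, vs))
    ((H + INR (S n) * (1 + 2 * (sum_f_R0 (fun k => Rabs (vs k)) n + 1) * Fm)) * d).
Proof.
  intros Hd0 HH HF Hd HQx HQv.
  set (V := sum_f_R0 (fun k => Rabs (vs k)) n + 1).
  set (cx := fun t => fst Q + t * (xs - fst Q)).
  set (cv := fun j t => snd Q j + t * (vs j - snd Q j)).
  assert (Hc : curve_from_to n cx cv Q (xs, vs)).
  { unfold cx, cv. repeat split; intros; try apply C1_affine; simpl; ring. }
  eapply Rbar_le_trans. apply (rdist_le _ _ _ _ _ _ _ Hc). cbv beta iota delta [Rbar_le].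
  assert (Hfm : 0 <= Fm) by (specialize (HF xs ltac:(rewrite Rminus_eq_0, Rabs_R0; lra) 0%nat);
                             pose proof (Rabs_pos (fz n f 0 xs)); lra).
  assert (HV : 1 <= V) by (unfold V; pose proof (sum_nonneg (fun k => Rabs (vs k)) n (fun i => Rabs_pos _)); lra).
  assert (HN : 1 <= INR (S n)) by (apply (le_INR 1); lia).
  set (Kl := H + INR (S n) * (1 + 2 * V * Fm)).
  set (g := gfun n f eta cx cv).
  assert (Hgc : forall t, continuous g t).
  { intros t. apply gfun_cont; auto. exact (proj1 Hc). exact (proj1 (proj2 Hc)). }
  assert (Hgle : forall t, 0 <= t <= 1 -> g t <= Kl * d).
  { intros t Ht. unfold g, gfun, gform.
    assert (Ecx : Derive cx t = xs - fst Q) by (unfold cx; apply Derive_affine). rewrite Ecx.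
    rewrite (sum_eq _ (fun j => (vs j - snd Q j + coef n f (cx t) (fun j0 : nat => cv j0 t) j * (xs - fst Q)) ^ 2))
      by (intros; unfold cv at 1; rewrite Derive_affine; auto).
    assert (Hxt : Rabs (cx t - xs) <= d0).
    { unfold cx. replace (fst Q + t * (xs - fst Q) - xs) with ((1 - t) * (fst Q - xs)) by ring.
      rewrite Rabs_mult, Rabs_pos_eq by lra. pose proof (Rabs_pos (fst Q - xs)).
      pose proof (Rmult_le_compat_r (Rabs (fst Q - xs)) (1 - t) 1 H0 ltac:(lra)). lra. }
    assert (Hvt : forall k, (k <= n)%nat -> Rabs (cv k t - vs k) <= d).
    { intros k Hk. unfold cv. replace (snd Q k + t * (vs k - snd Q k) - vs k) with ((1 - t) * (snd Q k - vs k)) by ring.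
      rewrite Rabs_mult, Rabs_pos_eq by lra. pose proof (Rabs_pos (snd Q k - vs k)). pose proof (HQv k Hk).
      pose proof (Rmult_le_compat_r (Rabs (snd Q k - vs k)) (1 - t) 1 H0 ltac:(lra)). lra. }
    assert (Heta : eta (cx t) (cv 0%nat t) <= H).
    { apply HH; auto. pose proof (Hvt 0%nat ltac:(lia)); lra. }
    assert (Hvz : forall k, Rabs (vz n (fun j0 => cv j0 t) k) <= V).
    { intros k. unfold vz. destruct (Nat.leb k n) eqn:E.
      - apply Nat.leb_le in E. pose proof (Hvt k E).
        pose proof (term_le_sum (fun k => Rabs (vs k)) n k (fun i => Rabs_pos _) E) as Ht2. simpl in Ht2.
        replace (cv k t) with (vs k + (cv k t - vs k)) by ring.
        eapply Rle_trans. apply Rabs_triang. unfold V. lra.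
      - rewrite Rabs_R0; lra. }
    assert (Hco : forall j, Rabs (coef n f (cx t) (fun j0 => cv j0 t) j) <= 2 * V * Fm).
    { intros j. apply coef_le2; auto. }
    set (a := (1 + 2 * V * Fm) * d).
    assert (Ha : 0 <= a) by (unfold a; apply Rmult_le_pos; [|lra]; assert (0 <= V * Fm) by (apply Rmult_le_pos; lra); lra).
    assert (Hterm : sum_f_R0 (fun j => (vs j - snd Q j + coef n f (cx t) (fun j0 : nat => cv j0 t) j * (xs - fst Q)) ^ 2) n
                    <= INR (S n) * a ^ 2).
    { rewrite Rmult_comm, <- sum_cte. apply sum_Rle. intros j Hj. apply sq_le_abs.
      eapply Rle_trans. apply Rabs_triang. rewrite Rabs_mult.
      rewrite Rabs_minus_sym. pose proof (HQv j Hj).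
      rewrite (Rabs_minus_sym xs) in *.
      assert (Rabs (coef n f (cx t) (fun j0 : nat => cv j0 t) j) * Rabs (fst Q - xs) <= 2 * V * Fm * d)
        by (apply Rmult_le_compat; auto using Rabs_pos).
      unfold a. lra. }
    assert (Hx2 : eta (cx t) (cv 0%nat t) ^ 2 * (xs - fst Q) ^ 2 <= (H * d) ^ 2).
    { rewrite Rpow_mult_distr. apply Rmult_le_compat; try apply pow2_ge_0.
      apply sq_le_abs. rewrite Rabs_pos_eq. auto. left; apply Hpos.
      apply sq_le_abs. rewrite Rabs_minus_sym; auto. }
    assert (HH0 : 0 <= H) by (pose proof (Hpos (cx t) (cv 0%nat t)); lra).
    replace (Kl * d) with (H * d + INR (S n) * a) by (unfold Kl, a; ring).
    rewrite <- (Rabs_pos_eq (H * d + INR (S n) * a)) by (apply Rplus_le_le_0_compat; apply Rmult_le_pos; lra).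
    rewrite <- abs_sqrt_sq. apply sqrt_le_1_alt.
    assert (0 <= H * d) by (apply Rmult_le_pos; lra).
    assert (INR (S n) * a^2 <= (INR (S n) * a)^2).
    { replace ((INR (S n) * a)^2) with ((INR (S n) * INR (S n)) * a^2) by ring.
      apply Rmult_le_compat_r. apply pow2_ge_0. pose proof (Rmult_le_compat_l (INR (S n)) 1 (INR (S n))). lra. }
    assert ((H*d)^2 + (INR (S n) * a)^2 <= (H*d + INR (S n) * a)^2).
    { assert (0 <= INR (S n) * a) by (apply Rmult_le_pos; lra).
      replace ((H*d + INR (S n) * a)^2) with ((H*d)^2 + (INR (S n) * a)^2 + 2 * ((H*d) * (INR (S n) * a))) by ring.
      assert (0 <= (H*d) * (INR (S n) * a)) by (apply Rmult_le_pos; lra). lra. }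
    cbv beta. lra. }
  unfold curve_length.
  assert (R0 : RInt g 0 0 = 0) by (rewrite RInt_point; reflexivity).
  assert (Hm : Kl * d * 0 - RInt g 0 0 <= Kl * d * 1 - RInt g 0 1).
  { apply (mono_deriv (fun s => Kl * d * s - RInt g 0 s) (fun s => Kl * d - g s) 0 1); [lra| |].
    - intros s _. apply (is_derive_minus (fun s => Kl * d * s) (fun s => RInt g 0 s) s (Kl * d) (g s)).
      auto_derive; auto; ring. apply is_derive_RInt0; auto.
    - intros s Hs'. pose proof (Hgle s Hs'); lra. }
  change (RInt (fun t => sqrt (gform n eta f (cx t) (fun j => cv j t) (Derive cx t) (fun j => Derive (cv j) t))) 0 1)
    with (RInt g 0 1).
  rewrite R0 in Hm. lra.
Qed.
End Line.


Lemma cauchy_lim (u : nat -> R) C : 0 < C ->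
  (forall eps, 0 < eps -> exists N, forall k m, (N <= k)%nat -> (N <= m)%nat -> Rabs (u k - u m) <= C * eps) ->
  forall eps, 0 < eps -> exists N, forall k, (N <= k)%nat -> Rabs (u k - real (Lim_seq u)) < eps.
Proof.
  intros HC H.
  assert (Hc : ex_lim_seq_cauchy u).
  { intros eps. destruct (H (eps / (2 * C))) as [N HN].
    apply Rdiv_lt_0_compat. apply cond_pos. lra.
    exists N. intros k m Hk Hm. specialize (HN k m Hk Hm).
    replace (C * (eps / (2 * C))) with (eps / 2) in HN by (field; lra). pose proof (cond_pos eps). lra. }
  apply ex_lim_seq_cauchy_corr in Hc.
  pose proof (Lim_seq_correct' u Hc) as Hl. apply is_lim_seq_spec in Hl.
  intros eps He. destruct (Hl (mkposreal eps He)) as [N HN]. exists N. intros k Hk. apply (HN k Hk).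
Qed.

Section Main.
Variable n : nat.
Variable f : nat -> R -> R.
Variable eta : R -> R -> R.
Hypothesis Hf : forall j : nat, (1 <= j <= n)%nat -> smooth1 (f j).

Definition Phi (y : R) := sum_f_R0 (fun i => Rabs (fz n f i y)) n.

Lemma Phi_ge0 y : 0 <= Phi y.
Proof. apply sum_nonneg. intros; apply Rabs_pos. Qed.

Lemma fz_le_Phi y i : Rabs (fz n f i y) <= Phi y.
Proof.
  destruct (Compare_dec.le_lt_dec i n).
  - apply (term_le_sum (fun i => Rabs (fz n f i y)) n i (fun _ => Rabs_pos _) l).
  - unfold fz. destruct (Nat.eqb i 0); [rewrite Rabs_R0; apply Phi_ge0|].
    rewrite (proj2 (Nat.leb_gt i n) l). rewrite Rabs_R0; apply Phi_ge0.
Qed.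

Lemma Phi_cont y : continuous Phi y.
Proof.
  unfold Phi. apply (csum (fun i y => Rabs (fz n f i y))). intros j _.
  apply continuous_Rabs_comp. apply (fz_cont n f Hf (fun y => y)). apply (continuous_id (U:=R_UniformSpace)).
Qed.
End Main.

Lemma exp_ge0 x : 0 <= exp x. Proof. left; apply exp_pos. Qed.

Theorem corollary3p5 (n : nat) (f : nat -> R -> R) (eta : R -> R -> R) :
  (forall j : nat, (1 <= j <= n)%nat -> smooth1 (f j)) ->
  smooth2 eta ->
  (forall x u : R, 0 < eta x u) ->
  (forall x : R, eta x 0 = 1) ->
  (forall x u : R, -2 * eta_uu eta x u / eta x u <= -2) ->
  (forall x : R, Rabs (eta_u eta x 0) <= 1) ->
  metric_complete n eta f.
Proof.
  intros Hf Hs Hpos H0 Hsc Hd0 P HP.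
  destruct (HP 1 Rlt_0_1) as [N1 HN1].
  set (P0 := P N1).
  set (K := INR (S n)).
  assert (HK : 0 <= K) by apply pos_INR.
  set (B0 := Nv n (snd P0) + K).
  set (B1 := B0 + K).
  assert (HB0 : 1 <= B0) by (pose proof (Nv_ge1 n (snd P0)); unfold B0; lra).
  assert (Hk : forall k, (N1 <= k)%nat -> Nv n (snd (P k)) <= B0 /\ Rabs (fst (P k) - fst P0) <= exp B0).
  { intros k Hk. destruct (rdist_lt_ex _ _ _ _ _ _ (HN1 N1 k (Nat.le_refl _) Hk)) as [cx [cv [Hc HL]]].
    destruct (curve_main n f eta Hf Hs Hpos H0 Hsc Hd0 cx cv P0 (P k) Hc) as [HL0 [HN [HX _]]].
    set (L := curve_length n eta f cx cv) in *. fold K in HN. fold K in HX.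
    assert (K * L <= K * 1) by (apply Rmult_le_compat_l; lra).
    split. unfold B0; lra.
    eapply Rle_trans. apply HX. replace (exp B0) with (exp B0 * 1) by ring.
    apply Rmult_le_compat; try lra. apply exp_ge0. apply exp_le. unfold B0; lra. }
  set (R0 := exp B0 + exp B1).
  destruct (continuity_ab_maj (Phi n f) (fst P0 - R0) (fst P0 + R0)) as [Mx [HMx _]].
  { unfold R0; pose proof (exp_pos B0); pose proof (exp_pos B1); lra. }
  { intros c _. apply continuity_pt_filterlim. apply (Phi_cont n f Hf). }
  set (Fm := Rabs (Phi n f Mx)).
  assert (HFm0 : 0 <= Fm) by apply Rabs_pos.
  assert (HFm : forall y, Rabs (y - fst P0) <= R0 -> forall i, Rabs (fz n f i y) <= Fm).
  { intros y Hy i. eapply Rle_trans. apply fz_le_Phi. eapply Rle_trans. apply HMx.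
    apply Rabs_le_between in Hy; lra. apply Rle_abs. }
  set (Kc := exp B1 + (1 + 2 * B1 * Fm * exp B1)).
  assert (HKc : 0 < Kc).
  { unfold Kc. pose proof (exp_pos B1). assert (0 <= 2 * B1 * Fm * exp B1).
    { apply Rmult_le_pos; [|apply exp_ge0]. apply Rmult_le_pos; unfold B1 in *; lra. } lra. }
  assert (Hcau : forall eps, 0 < eps -> exists N, forall k m, (N <= k)%nat -> (N <= m)%nat ->
     Rabs (fst (P m) - fst (P k)) <= Kc * eps /\
     forall j, (j <= n)%nat -> Rabs (snd (P m) j - snd (P k) j) <= Kc * eps).
  { intros eps He. destruct (HP (Rmin eps 1)) as [N2 HN2].
    { apply Rmin_pos; lra. }
    exists (max N1 N2). intros k m Hkk Hm.
    destruct (rdist_lt_ex _ _ _ _ _ _ (HN2 k m ltac:(lia) ltac:(lia))) as [cx [cv [Hc HL]]].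
    destruct (curve_main n f eta Hf Hs Hpos H0 Hsc Hd0 cx cv (P k) (P m) Hc) as [HL0 [_ [HX HV]]].
    set (L := curve_length n eta f cx cv) in *. fold K in HX. fold K in HV.
    set (B := Nv n (snd (P k)) + K * L) in *.
    assert (HLe : L <= eps) by (pose proof (Rmin_l eps 1); lra).
    assert (HL1 : L <= 1) by (pose proof (Rmin_r eps 1); lra).
    destruct (Hk k ltac:(lia)) as [HNk HXk].
    assert (HBB : B <= B1).
    { unfold B, B1. assert (K * L <= K * 1) by (apply Rmult_le_compat_l; lra). lra. }
    assert (HB1 : 1 <= B) by (pose proof (Nv_ge1 n (snd (P k))); pose proof (Rmult_le_pos K L HK HL0); unfold B; lra).
    assert (HeB : exp B <= exp B1) by (apply exp_le; auto).
    assert (HeBL : exp B * L <= exp B1 * eps) by (apply Rmult_le_compat; auto using exp_ge0).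
    assert (Hpos2 : 0 <= 2 * B1 * Fm * exp B1).
    { apply Rmult_le_pos; [|apply exp_ge0]. apply Rmult_le_pos; unfold B1 in *; lra. }
    split.
    - eapply Rle_trans. apply HX. eapply Rle_trans. apply HeBL.
      apply Rmult_le_compat_r. lra. unfold Kc. lra.
    - intros j Hj. eapply Rle_trans. apply (HV Fm HFm0).
      { intros y Hy i. apply HFm. replace (y - fst P0) with ((y - fst (P k)) + (fst (P k) - fst P0)) by ring.
        eapply Rle_trans. apply Rabs_triang. unfold R0.
        assert (exp B * L <= exp B1 * 1) by (apply Rmult_le_compat; auto using exp_ge0). lra. }
      auto.
      assert (H2 : 2 * B * Fm * exp B <= 2 * B1 * Fm * exp B1).
      { apply Rmult_le_compat; auto using exp_ge0.
        apply Rmult_le_pos; [|lra]. lra.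
        apply Rmult_le_compat_r; lra. }
      eapply Rle_trans. apply (Rmult_le_compat _ ((1 + 2 * B1 * Fm * exp B1)) _ eps).
      { assert (0 <= 2 * B * Fm * exp B).
        { apply Rmult_le_pos; [|apply exp_ge0]. apply Rmult_le_pos; lra. } lra. }
      auto. lra. auto.
      apply Rmult_le_compat_r. lra. unfold Kc. pose proof (exp_pos B1). lra. }
  set (xs := real (Lim_seq (fun k => fst (P k)))).
  set (vs := fun j => real (Lim_seq (fun k => snd (P k) j))).
  assert (Hlx := cauchy_lim (fun k => fst (P k)) Kc HKc).
  assert (Hlv := fun j => cauchy_lim (fun k => snd (P k) j) Kc HKc).
  exists (xs, vs).
  intros eps He.
  destruct (cont_ball2 (fun p => dpart nil eta (fst p) (snd p)) (xs, vs 0%nat) (proj1 (Hs nil xs (vs 0%nat))))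
    as [d1 [Hd1 Hb1]].
  destruct (cont_ball1 (Phi n f) xs (Phi_cont n f Hf xs)) as [d2 [Hd2 Hb2]].
  set (d0 := Rmin (Rmin d1 d2) 1 / 2).
  assert (Hd0a : 0 < d0 <= 1).
  { unfold d0. pose proof (Rmin_r (Rmin d1 d2) 1). assert (0 < Rmin (Rmin d1 d2) 1) by (repeat apply Rmin_pos; lra). lra. }
  assert (Hd0b : d0 < d1 /\ d0 < d2).
  { unfold d0. pose proof (Rmin_l (Rmin d1 d2) 1). pose proof (Rmin_l d1 d2). pose proof (Rmin_r d1 d2).
    assert (0 < Rmin (Rmin d1 d2) 1) by (repeat apply Rmin_pos; lra). lra. }
  set (H := eta xs (vs 0%nat) + 1).
  assert (HH : forall x u, Rabs (x - xs) <= d0 -> Rabs (u - vs 0%nat) <= d0 -> eta x u <= H).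
  { intros x u Hx Hu. specialize (Hb1 x u ltac:(simpl; lra) ltac:(simpl; lra)). simpl in Hb1.
    apply Rabs_lt_between in Hb1. unfold H. lra. }
  set (Fm2 := Phi n f xs + 1).
  assert (HF2 : forall y, Rabs (y - xs) <= d0 -> forall i, Rabs (fz n f i y) <= Fm2).
  { intros y Hy i. specialize (Hb2 y ltac:(lra)). apply Rabs_lt_between in Hb2.
    pose proof (fz_le_Phi n f y i). unfold Fm2. lra. }
  set (Kl := H + INR (S n) * (1 + 2 * (sum_f_R0 (fun k => Rabs (vs k)) n + 1) * Fm2)).
  assert (HKl : 0 < Kl).
  { unfold Kl, H. pose proof (Hpos xs (vs 0%nat)). pose proof (Phi_ge0 n f xs).
    pose proof (sum_nonneg (fun k => Rabs (vs k)) n (fun _ => Rabs_pos _)).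
    assert (0 <= INR (S n) * (1 + 2 * (sum_f_R0 (fun k => Rabs (vs k)) n + 1) * Fm2)).
    { apply Rmult_le_pos. apply pos_INR. unfold Fm2.
      assert (0 <= 2 * (sum_f_R0 (fun k => Rabs (vs k)) n + 1) * (Phi n f xs + 1)).
      { apply Rmult_le_pos; lra. } lra. }
    lra. }
  set (d := Rmin d0 (eps / (2 * Kl))).
  assert (Hd : 0 < d) by (apply Rmin_pos; [lra| apply Rdiv_lt_0_compat; lra]).
  assert (Hcx : forall e, 0 < e -> exists N, forall k m, (N <= k)%nat -> (N <= m)%nat ->
     Rabs (fst (P k) - fst (P m)) <= Kc * e).
  { intros e He'. destruct (Hcau e He') as [N HN]. exists N. intros k m Hk' Hm.
    destruct (HN m k Hm Hk') as [A _]. exact A. }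
  destruct (Hlx Hcx d Hd) as [Nx HNx].
  destruct (ev_all (fun j k => Rabs (snd (P k) j - vs j) < d) n) as [Nv' HNv].
  { intros j Hj.
    assert (Hcj : forall e, 0 < e -> exists N, forall k m, (N <= k)%nat -> (N <= m)%nat ->
       Rabs (snd (P k) j - snd (P m) j) <= Kc * e).
    { intros e He'. destruct (Hcau e He') as [N HN]. exists N. intros k m Hk' Hm.
      destruct (HN m k Hm Hk') as [_ A]. apply A; auto. }
    exact (Hlv j Hcj d Hd). }
  exists (max Nx Nv'). intros k Hkk.
  eapply Rbar_le_lt_trans.
  apply (line_bound n f eta Hf Hs Hpos xs vs d0 H Fm2 (P k) d Hd0a HH HF2).
  { split. lra. apply Rmin_l. }
  { left. apply HNx. lia. }
  { intros j Hj. left. apply HNv; auto. lia. }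
  change (Kl * d < eps).
  assert (d <= eps / (2 * Kl)) by apply Rmin_r.
  assert (Kl * d <= Kl * (eps / (2 * Kl))) by (apply Rmult_le_compat_l; lra).
  replace (Kl * (eps / (2 * Kl))) with (eps / 2) in H2 by (field; lra). lra.
Qed.
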